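(* Let $n\ge 2$ and let $S$ be $\mathcal{PI}^{\ast}_n$ or $\overline{\mathcal{PI}^{\ast}}_n$. Up to equivalence, $S$ has exactly one faithful effective transitive representation, and it is a representation into $\mathcal{I}_{2^n-1}$ (i.e. the corresponding set of right cosets has $2^n-1$ elements). In particular, $\mathcal{PI}^{\ast}_n$ and $\overline{\mathcal{PI}^{\ast}}_n$ embed into the symmetric inverse semigroup $\mathcal{I}_{2^n-1}$.
   Context: Let $X=\{1,\dots,n\}$, $X'=\{1',\dots,n'\}$, and let $P_n$ be the set of partitions of $X\cup X'$ each of whose blocks is a singleton (point) or a generalised line (a set meeting both $X$ and $X'$). $\mathcal{PI}^{\ast}_n=(P_n,\star)$, where (with $X''$ a third copy of $X$, regarding $\alpha$ as a partition of $X\cup X''$ and $\beta$ of $X''\cup X'$, and $\sim$ the equivalence on $X\cup X''\cup X'$ generated by the blocks of both) $\alpha\star\beta$ is the partition of $X\cup X'$ in which distinct $u,v$ are in one block iff $u\sim v$ and the $\sim$-class of $u$ contains no singleton block of $\alpha$ or $\beta$. $\overline{\mathcal{PI}^{\ast}}_n=(P_n,\circ)$, where $\alpha\circ\beta$ has as generalised lines exactly the sets $A\cup D'$ with $A\cup B'$ a generalised line of $\alpha$ and $B\cup D'$ a generalised line of $\beta$ (same $B$), other elements being points. Both are inverse semigroups. For an inverse semigroup $S$: the natural partial order is $s\le t$ iff $s=et$ for some idempotent $e$; for $H\subseteq S$, $H\varrho=\{s\in S: s\ge h\text{ for some }h\in H\}$; a closed inverse subsemigroup is an inverse subsemigroup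 $H$ with $H\varrho=H$; $\mathcal{C}_H=\{(Hs)\varrho: ss^{-1}\in H\}$; the effective transitive representation $\phi_H:S\to\mathcal{I}_{\mathcal{C}_H}$ (symmetric inverse semigroup of partial bijections of $\mathcal{C}_H$) is $\phi_H(s)=\{((Hx)\varrho,(Hxs)\varrho): (Hx)\varrho,(Hxs)\varrho\in\mathcal{C}_H\}$; $\phi_H$ and $\phi_K$ are equivalent iff there is $a\in S$ with $a^{-1}Ha\subseteq K$ and $aKa^{-1}\subseteq H$. *)

(* Defs.v *)
From mathcomp Require Import all_boot.
Set Implicit Arguments. Unset Strict Implicit. Unset Printing Implicit Defensive.

(* ---------- Generic inverse-semigroup notions ----------
   The semigroup is a carrier S : {set T} inside a finite type T,
   with multiplication mul (only its values on S matter). *)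
Section InvSemi.
Variables (T : finType) (S : {set T}) (mul : T -> T -> T).

(* the (unique, in an inverse semigroup) inverse s^{-1} *)
Definition sinv (s : T) : T :=
  odflt s [pick t in S | (mul (mul s t) s == s) && (mul (mul t s) t == t)].

Definition idem (e : T) : bool := (e \in S) && (mul e e == e).

Definition nleq (s t : T) : bool := [exists e in S, idem e && (s == mul e t)].

Definition upclose (H : {set T}) : {set T} :=
  [set s in S | [exists h in H, nleq h s]].

Definition inv_subsemigroup (H : {set T}) : bool :=
  [&& H \subset S, H != set0,
      [forall h in H, forall k in H, mul h k \in H]
    & [forall h in H, sinv h \in H]].

Definition closed_inv_subsemigroup (H : {set T}) : bool :=
  inv_subsemigroup H && (upclose H == H).

Definition rcoset (H : {set T}) (s : T) : {set T} :=
  upclose [set mul h s | h in H].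

Definition cosets (H : {set T}) : {set {set T}} :=
  [set rcoset H s | s in S & mul s (sinv s) \in H].

(* phi_H(s), as the graph of a partial bijection of C_H *)
Definition phi (H : {set T}) (s : T) : {set ({set T} * {set T})} :=
  [set p | [exists x in S, [&& p == (rcoset H x, rcoset H (mul x s)),
                              rcoset H x \in cosets H &
                              rcoset H (mul x s) \in cosets H]]].

Definition faithful (H : {set T}) : Prop := {in S &, injective (phi H)}.

Definition rep_equiv (H K : {set T}) : bool :=
  [exists a in S,
     ([set mul (mul (sinv a) h) a | h in H] \subset K) &&
     ([set mul (mul a k) (sinv a) | k in K] \subset H)].

End InvSemi.

(* ---------- The partitions P_n ----------
   X u X' is encoded as 'I_n + 'I_n : inl i = i, inr i = i'. *)
Section Partitions.
Variable n : nat.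

Definition XX := ('I_n + 'I_n)%type.
Definition PT := {set {set XX}}.

Definition gline (B : {set XX}) : bool :=
  [exists i, inl i \in B] && [exists j, inr j \in B].

Definition valid (P : PT) : bool :=
  partition P [set: XX] && [forall B in P, (#|B| == 1) || gline B].

Definition Pn : {set PT} := [set P | valid P].

(* --- the product of PI*_n --- ; X u X'' u X' encoded as
   inl (inl i) = i, inl (inr i) = i'', inr i = i'. *)
Definition XXX := ('I_n + 'I_n + 'I_n)%type.

Definition ea (x : XX) : XXX :=
  match x with inl i => inl (inl i) | inr i => inl (inr i) end.
Definition eb (x : XX) : XXX :=
  match x with inl i => inl (inr i) | inr i => inr i end.
Definition eout (x : XX) : XXX :=
  match x with inl i => inl (inl i) | inr i => inr i end.

Definition genrel (a b : PT) : rel XXX := fun u v =>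
  [exists B in a, (u \in ea @: B) && (v \in ea @: B)] ||
  [exists B in b, (u \in eb @: B) && (v \in eb @: B)].

Definition sim (a b : PT) : rel XXX := connect (genrel a b).

Definition from_singleton (a b : PT) (w : XXX) : bool :=
  [exists x, ([set x] \in a) && (w == ea x)] ||
  [exists x, ([set x] \in b) && (w == eb x)].

Definition bad (a b : PT) (u : XX) : bool :=
  [exists w, sim a b (eout u) w && from_singleton a b w].

Definition star (a b : PT) : PT :=
  [set [set v | (v == u) || (sim a b (eout u) (eout v) && ~~ bad a b u)] | u : XX].

Definition lpart (L : {set XX}) : {set 'I_n} := [set i | inl i \in L].
Definition rpart (L : {set XX}) : {set 'I_n} := [set i | inr i \in L].

Definition mkblock (A D : {set 'I_n}) : {set XX} :=
  [set x | match x with inl i => i \in A | inr j => j \in D end].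

Definition circ_lines (a b : PT) : PT :=
  [set mkblock (lpart L) (rpart M) | L in a, M in b &
     [&& gline L, gline M & rpart L == lpart M]].

Definition circ (a b : PT) : PT :=
  circ_lines a b :|: [set [set x] | x in ~: cover (circ_lines a b)].

End Partitions.

(* Main.v *)
Require Import Defs.
From mathcomp Require Import all_boot.
Set Implicit Arguments. Unset Strict Implicit. Unset Printing Implicit Defensive.
Set Warnings "-notation-overridden".

Section Rel.
Variable V : finType.
Definition rcomp (f g : {set V * V}) : {set V * V} :=
  [set p | [exists y, ((p.1, y) \in f) && ((y, p.2) \in g)]].
Definition rinv (f : {set V * V}) : {set V * V} := [set p | (p.2, p.1) \in f].
Definition pinj (f : {set V * V}) :=
  (forall x y z, (x,y) \in f -> (x,z) \in f -> y = z) /\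
  (forall x y z, (x,z) \in f -> (y,z) \in f -> x = y).
Definition isdiag (f : {set V * V}) := [forall p in f, p.1 == p.2].

Lemma compP (f g : {set V * V}) x z :
  reflect (exists y, (x,y) \in f /\ (y,z) \in g) ((x,z) \in rcomp f g).
Proof.
rewrite inE; apply: (iffP existsP) => [[y /andP[]]|[y []]] /=; eauto.
by move=> ??; exists y; apply/andP.
Qed.

Lemma rinvE (f : {set V * V}) x y : ((x,y) \in rinv f) = ((y,x) \in f).
Proof. by rewrite inE. Qed.

Lemma isdiagP (f : {set V * V}) : reflect (forall x y, (x,y) \in f -> x = y) (isdiag f).
Proof.
apply: (iffP forall_inP) => [H x y /H /eqP //|H [x y] /H ->//].
Qed.

Lemma comp_pinj f g : pinj f -> pinj g -> pinj (rcomp f g).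
Proof.
move=> [f1 f2] [g1 g2]; split.
  move=> x y z /compP[u [xu uy]] /compP[v [xv vz]].
  by have ? := f1 _ _ _ xu xv; subst v; apply: g1 uy vz.
move=> x y z /compP[u [xu uz]] /compP[v [yv vz]].
by have ? := g2 _ _ _ uz vz; subst v; apply: f2 xu yv.
Qed.

Lemma rinv_pinj f : pinj f -> pinj (rinv f).
Proof.
move=> [f1 f2]; split => x y z; rewrite !rinvE; [exact: f2|exact: f1].
Qed.

Lemma rinv_uniq f g : pinj f -> pinj g ->
  rcomp (rcomp f g) f = f -> rcomp (rcomp g f) g = g -> g = rinv f.
Proof.
move=> [f1 f2] [g1 g2] E1 E2; apply/setP => -[y x]; rewrite rinvE.
apply/idP/idP => H.
  have H0 := H; rewrite -E2 in H0; case/compP: H0 => q [/compP[p [yp pq]] qx].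
  have ? := g1 _ _ _ yp H; subst p.
  by have ? := g2 _ _ _ qx H; subst q.
have H0 := H; rewrite -E1 in H0; case/compP: H0 => q [/compP[p [xp pq]] qy].
have ? := f1 _ _ _ xp H; subst p.
by have ? := f2 _ _ _ qy H; subst q.
Qed.

Lemma card_comp_le f g : pinj f -> pinj g -> #|rcomp f g| <= #|g|.
Proof.
move=> pf pg; have [_ c2] := comp_pinj pf pg.
have -> : #|rcomp f g| = #|[set p.2 | p in rcomp f g]|.
  apply/esym/card_in_imset => -[x z] [y z'] /= H1 H2 /= E; subst z'.
  by rewrite (c2 _ _ _ H1 H2).
apply: leq_trans (leq_imset_card (fun p : V * V => p.2) g).
apply: subset_leq_card; apply/subsetP => _ /imsetP[[x z] /compP[y [_ yz]] ->].
by apply/imsetP; exists (y,z).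
Qed.

End Rel.

Section RelMore.
Variable V : finType.
Implicit Types f g : {set V * V}.

Lemma rinvK f : rinv (rinv f) = f.
Proof. by apply/setP => -[x y]; rewrite !rinvE. Qed.

Lemma comp_rinv_id f : pinj f -> rcomp (rcomp f (rinv f)) f = f.
Proof.
move=> [f1 f2]; apply/setP => -[x y]; apply/idP/idP.
  case/compP => q [/compP[p [xp]]]; rewrite rinvE => qp qy.
  by have ? := f2 _ _ _ xp qp; subst q.
move=> xy; apply/compP; exists x; split => //; apply/compP; exists y.
by rewrite rinvE.
Qed.

Lemma diag_comp_id f : isdiag f -> rcomp f f = f.
Proof.
move/isdiagP => D; apply/setP => -[x y]; apply/idP/idP.
  by case/compP => z [/D -> ].
move=> xy; apply/compP; exists x; split => //.
by rewrite {2}(D _ _ xy).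
Qed.

Lemma rinv_diag f : pinj f -> isdiag (rcomp f (rinv f)).
Proof.
move=> [f1 f2]; apply/isdiagP => x y /compP[p [xp]]; rewrite rinvE => yp.
exact: f2 xp yp.
Qed.

Lemma comp_sub f g : pinj f -> pinj g -> f \subset g ->
  rcomp (rcomp f (rinv f)) g = f.
Proof.
move=> [f1 f2] [g1 g2] /subsetP fg; apply/setP => -[x y]; apply/idP/idP.
  case/compP => q [/compP[p [xp]]]; rewrite rinvE => qp qy.
  have ? := f2 _ _ _ xp qp; subst q.
  by have ? := g1 _ _ _ (fg _ xp) qy; subst p.
move=> xy; apply/compP; exists x; split; last exact: fg.
by apply/compP; exists y; rewrite rinvE.
Qed.

Lemma comp_diag_sub f g : isdiag f -> rcomp f g \subset g.
Proof.
move/isdiagP => D; apply/subsetP => -[x y] /compP[z [/D -> //]].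
Qed.

Lemma diag_sub_comp f g : isdiag f -> isdiag g -> rcomp f g \subset f.
Proof.
move=> /isdiagP Df /isdiagP Dg; apply/subsetP => -[x y] /compP[z [xz /Dg <- //]].
Qed.

Lemma comp_diag f g : isdiag f -> isdiag g -> isdiag (rcomp f g).
Proof.
move=> /isdiagP Df /isdiagP Dg; apply/isdiagP => x y /compP[z [/Df -> /Dg //]].
Qed.

Lemma conj_diag g d : pinj g -> isdiag d -> isdiag (rcomp (rcomp g d) (rinv g)).
Proof.
move=> [g1 g2] /isdiagP D; apply/isdiagP => a b /compP[c [/compP[c1 [ac1 /D ?]]]].
subst c1; rewrite rinvE => bc; exact: g2 ac1 bc.
Qed.

Lemma card_diag_le (d g : {set V * V}) : isdiag d ->
  (forall x y, (x,y) \in d -> exists z, (x,z) \in g) -> #|d| <= #|g|.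
Proof.
move=> /isdiagP D H.
have -> : #|d| = #|[set p.1 | p in d]|.
  apply/esym/card_in_imset => -[x y] [x' y'] /D /= -> /D /= -> /= ->; by [].
apply: leq_trans (leq_imset_card (fun p : V * V => p.1) g).
apply: subset_leq_card; apply/subsetP => _ /imsetP[[x y] /H [z xz] ->].
by apply/imsetP; exists (x,z).
Qed.

End RelMore.

Section Abs.
Variable n : nat.
Local Notation V := {set 'I_n}.
Local Notation S := (Pn n).
Variables (mul : PT n -> PT n -> PT n) (r : PT n -> {set V * V})
  (L : V -> V -> PT n).
Hypothesis mulS : forall a b, a \in S -> b \in S -> mul a b \in S.
Hypothesis mulr : forall a b, a \in S -> b \in S -> r (mul a b) = rcomp (r a) (r b).
Hypothesis r_inj : {in S &, injective r}.
Hypothesis r_pinj : forall a, a \in S -> pinj (r a).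
Hypothesis r_inv : forall a, a \in S -> exists2 t, t \in S & r t = rinv (r a).
Hypothesis r_ne : forall a p, a \in S -> p \in r a -> (p.1 != set0) && (p.2 != set0).
Hypothesis LS : forall A B, A != set0 -> B != set0 -> L A B \in S.
Hypothesis Lr : forall A B, A != set0 -> B != set0 -> r (L A B) = [set (A,B)].

Lemma sinvS a : a \in S -> sinv S mul a \in S /\ r (sinv S mul a) = rinv (r a).
Proof.
move=> aS; rewrite /sinv; case: pickP => [t /and3P[tS /eqP E1 /eqP E2]| none].
  split => //; apply: rinv_uniq (r_pinj aS) (r_pinj tS) _ _.
    by rewrite -!mulr ?mulS // E1.
  by rewrite -!mulr ?mulS // E2.
exfalso; have [t tS rt] := r_inv aS; move: (none t); rewrite tS /=.
have pa := r_pinj aS.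
have -> : mul (mul a t) a = a.
  by apply: r_inj; rewrite ?mulS // !mulr ?mulS // rt comp_rinv_id.
have -> : mul (mul t a) t = t.
  apply: r_inj; rewrite ?mulS // !mulr ?mulS // rt.
  by rewrite -{2}(rinvK (r a)) comp_rinv_id //; apply: rinv_pinj.
by rewrite !eqxx.
Qed.

Lemma sinvS1 a : a \in S -> sinv S mul a \in S.
Proof. by case/sinvS. Qed.
Lemma sinvr a : a \in S -> r (sinv S mul a) = rinv (r a).
Proof. by case/sinvS. Qed.

Lemma idem_diag e : e \in S -> idem S mul e -> isdiag (r e).
Proof.
move=> eS /andP[_ /eqP E]; have [f1 f2] := r_pinj eS.
have E' : r e = rcomp (r e) (r e) by rewrite -mulr // E.
apply/isdiagP => x y xy; have := xy; rewrite {1}E' => /compP[z [xz zy]].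
have ? := f1 _ _ _ xz xy; subst z.
exact: f2 xy zy.
Qed.

Lemma nleqE s t : s \in S -> t \in S -> nleq S mul s t = (r s \subset r t).
Proof.
move=> sS tS; apply/existsP/idP.
  case=> e /and3P[eS /[dup] ie /andP[_ _] /eqP ->].
  by rewrite mulr // comp_diag_sub // idem_diag.
move=> st; exists (mul s (sinv S mul s)).
have eS : mul s (sinv S mul s) \in S by rewrite mulS // sinvS1.
have re : r (mul s (sinv S mul s)) = rcomp (r s) (rinv (r s)) by rewrite mulr ?sinvr ?sinvS1.
rewrite eS /=; apply/andP; split.
  rewrite /idem eS /=; apply/eqP; apply: r_inj => //; first by rewrite mulS.
  rewrite mulr // re.
  by rewrite diag_comp_id //; apply: rinv_diag; apply: r_pinj.
apply/eqP; apply: r_inj => //; first by rewrite mulS.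
by rewrite mulr // re comp_sub //; apply: r_pinj.
Qed.

Lemma upcloseE (Hs : {set PT n}) s : Hs \subset S ->
  (s \in upclose S mul Hs) = (s \in S) && [exists h in Hs, r h \subset r s].
Proof.
move=> /subsetP HS; rewrite inE; case sS: (s \in S) => //=.
apply/existsP/existsP => -[h /andP[hH P]]; exists h; rewrite hH /=.
  by rewrite -nleqE // HS.
by rewrite nleqE // HS.
Qed.

Lemma subS_mulset (K : {set PT n}) y : K \subset S -> y \in S ->
  [set mul h y | h in K] \subset S.
Proof.
move=> /subsetP KS yS; apply/subsetP => _ /imsetP[h hK ->]; exact: mulS (KS _ hK) yS.
Qed.

Lemma in_rcoset (K : {set PT n}) k y : K \subset S -> k \in K -> y \in S ->
  mul k y \in rcoset S mul K y.
Proof.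
move=> KS kK yS; rewrite /rcoset upcloseE ?subS_mulset //.
have kS : k \in S by exact: (subsetP KS).
rewrite mulS //=; apply/existsP; exists (mul k y); rewrite subxx andbT.
by apply/imsetP; exists k.
Qed.

Variables (i0 i1 : 'I_n).
Hypothesis i01 : i0 != i1.
Local Notation I0 := [set i0].
Local Notation I1 := [set i1].

Lemma I0ne : I0 != set0.
Proof. by apply/set0Pn; exists i0; rewrite inE. Qed.
Lemma I1ne : I1 != set0.
Proof. by apply/set0Pn; exists i1; rewrite inE. Qed.

Definition Hs := [set t in S | (I0,I0) \in r t].

Lemma HsS : Hs \subset S.
Proof. by apply/subsetP => t; rewrite inE => /andP[]. Qed.

Lemma closedH : closed_inv_subsemigroup S mul Hs.
Proof.
apply/andP; split.
  apply/and4P; split.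
  - exact: HsS.
  - apply/set0Pn; exists (L I0 I0); rewrite inE LS ?I0ne // Lr ?I0ne // !inE eqxx //.
  - apply/forall_inP => h /setIdP[hS hI]; apply/forall_inP => k.
    move=> /setIdP[kS kI]; rewrite inE mulS // mulr //.
    by apply/compP; exists I0.
  - apply/forall_inP => h /setIdP[hS hI].
    by rewrite inE sinvS1 // sinvr // rinvE.
apply/eqP/setP => s; rewrite upcloseE ?HsS //; apply/idP/idP.
  case/andP => sS /exists_inP[h]; rewrite inE => /andP[hS hI] /subsetP P.
  by rewrite inE sS P.
move=> sH; have := sH; rewrite inE => /andP[sS _]; rewrite sS /=.
by apply/exists_inP; exists s.
Qed.

Definition U B := [set w in S | (I0,B) \in r w].

Lemma L0y y : y \in S -> r (mul (L I0 I0) y) = [set p in r y | p.1 == I0].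
Proof.
move=> yS; rewrite mulr ?LS ?I0ne // Lr ?I0ne //; apply/setP => -[x z].
apply/compP/setIdP => [[u []]|[xz /eqP /= ?]]; last subst x.
  by rewrite inE => /eqP[-> ->] ->.
by exists I0; split => //; rewrite set11.
Qed.

Lemma rcosetE y B : y \in S -> (I0,B) \in r y -> rcoset S mul Hs y = U B.
Proof.
move=> yS yB; apply/setP => w; rewrite /rcoset upcloseE ?subS_mulset ?HsS //.
rewrite [w \in U B]inE; case wS: (w \in S) => //=; apply/idP/idP.
  case/exists_inP => w0 /imsetP[h /setIdP[hS hI] ->] /subsetP P; apply: P.
  by rewrite mulr //; apply/compP; exists I0.
move=> wB; apply/exists_inP; exists (mul (L I0 I0) y).
  apply/imsetP; exists (L I0 I0) => //; apply/setIdP; split; first by rewrite LS ?I0ne.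
  by rewrite Lr ?I0ne // set11.
apply/subsetP => -[x z]; rewrite L0y // => /setIdP[xz /= /eqP ?]; subst x.
by have [f1 _] := r_pinj yS; rewrite (f1 _ _ _ xz yB).
Qed.

Lemma LH : L I0 I0 \in Hs.
Proof. by apply/setIdP; split; rewrite ?LS ?Lr ?I0ne ?set11. Qed.

Lemma cosets_in s : s \in S -> mul s (sinv S mul s) \in Hs ->
   exists2 B, B != set0 & (I0,B) \in r s.
Proof.
move=> sS /setIdP[_]; rewrite mulr ?sinvS1 // sinvr //.
case/compP => B [sB _]; exists B => //.
by case/andP: (r_ne sS sB).
Qed.

Lemma rcoset_in y : y \in S -> rcoset S mul Hs y \in cosets S mul Hs ->
  exists2 B, B != set0 & (I0,B) \in r y.
Proof.
move=> yS /imsetP[s /setIdP[sS sP] E].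
have [B Bne sB] := cosets_in sS sP.
rewrite (rcosetE sS sB) in E.
have : mul (L I0 I0) y \in U B by rewrite -E; apply: in_rcoset => //; [exact: HsS| exact: LH].
case/setIdP => _; rewrite L0y // => /setIdP[? _]; by exists B.
Qed.

Lemma U_inj B B' : B != set0 -> U B = U B' -> B = B'.
Proof.
move=> Bne E; have : L I0 B \in U B by apply/setIdP; rewrite LS ?I0ne // Lr ?I0ne // set11.
by rewrite E => /setIdP[_]; rewrite Lr ?I0ne // inE => /eqP[].
Qed.

Lemma cosetsE : cosets S mul Hs = [set U B | B in [set B : V | B != set0]].
Proof.
apply/setP => C; apply/imsetP/imsetP.
  case=> s /setIdP[sS sP] ->; have [B Bne sB] := cosets_in sS sP.
  by exists B; rewrite ?inE // (rcosetE sS sB).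
case=> B; rewrite inE => Bne ->.
have LBS : L I0 B \in S by rewrite LS ?I0ne.
have LB : (I0,B) \in r (L I0 B) by rewrite Lr ?I0ne // set11.
exists (L I0 B); last by rewrite (rcosetE LBS LB).
apply/setIdP; split => //; apply/setIdP; split; first by rewrite mulS // sinvS1.
by rewrite mulr ?sinvS1 // sinvr //; apply/compP; exists B; rewrite rinvE.
Qed.

Lemma card_cosets : #|cosets S mul Hs| = 2 ^ n - 1.
Proof.
rewrite cosetsE card_in_imset; last first.
  by move=> B B'; rewrite inE => Bne _; apply: U_inj.
have -> : [set B : V | B != set0] = [set~ set0] by apply/setP => B; rewrite !inE.
rewrite cardsC1 -cardsT -powersetT card_powerset cardsT card_ord.
by rewrite subn1.
Qed.

Lemma phi_sub s t : s \in S -> t \in S -> phi S mul Hs s = phi S mul Hs t ->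
  r s \subset r t.
Proof.
move=> sS tS E; apply/subsetP => -[B D] BD.
have /andP[/= Bne Dne] := r_ne sS BD.
have xS : L I0 B \in S by rewrite LS ?I0ne.
have xB : (I0,B) \in r (L I0 B) by rewrite Lr ?I0ne // set11.
have xsD : (I0,D) \in r (mul (L I0 B) s) by rewrite mulr //; apply/compP; exists B.
have : (U B, U D) \in phi S mul Hs s.
  rewrite inE; apply/exists_inP; exists (L I0 B) => //.
  rewrite (rcosetE xS xB) (rcosetE (mulS xS sS) xsD) eqxx /= cosetsE.
  by apply/andP; split; apply/imsetP; [exists B|exists D]; rewrite ?inE.
rewrite E inE => /exists_inP[x' x'S /and3P[/eqP [E1 E2] c1 c2]].
have [B' _ x'B'] := rcoset_in x'S c1.
rewrite (rcosetE x'S x'B') in E1; have ? := U_inj Bne E1; subst B'.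
have [D' _ xtD'] := rcoset_in (mulS x'S tS) c2.
rewrite (rcosetE (mulS x'S tS) xtD') in E2; have ? := U_inj Dne E2; subst D'.
move: xtD'; rewrite mulr // => /compP[y [x'y yD]].
have [f1 _] := r_pinj x'S; by rewrite (f1 _ _ _ x'B' x'y).
Qed.

Lemma faithfulH : faithful S mul Hs.
Proof.
move=> s t sS tS E; apply: r_inj => //; apply/eqP; rewrite eqEsubset.
by rewrite !phi_sub.
Qed.

Lemma s12 : L I0 I0 != L I0 I1.
Proof.
apply/negP => /eqP E; have := congr1 r E; rewrite !Lr ?I0ne ?I1ne // => E'.
have : (I0,I0) \in [set (I0,I1)] by rewrite -E' set11.
rewrite inE => /eqP [] /setP /(_ i0); rewrite !inE eqxx => E0.
by move: i01; rewrite -E0.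
Qed.

Lemma uniqK K : closed_inv_subsemigroup S mul K -> faithful S mul K ->
  rep_equiv S mul Hs K.
Proof.
case/andP => /and4P[KS Kne /forall_inP Kmul /forall_inP Kinv] /eqP Kup Kf.
have inKS k : k \in K -> k \in S by apply: (subsetP KS).
have mulKK h k : h \in K -> k \in K -> mul h k \in K.
  by move=> hK kK; exact: (forall_inP (Kmul h hK) k kK).
have upK s t : t \in K -> s \in S -> r t \subset r s -> s \in K.
  move=> tK sS ts; rewrite -Kup upcloseE // sS; by apply/exists_inP; exists t.
have [k0 k0K] := set0Pn _ Kne.
have P0 : (mul k0 (sinv S mul k0) \in K) && isdiag (r (mul k0 (sinv S mul k0))).
  rewrite mulKK ?Kinv //= mulr ?inKS ?Kinv // sinvr ?inKS //.
  by apply: rinv_diag; apply: r_pinj; apply: inKS.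
case: (@arg_minnP _ _ (fun e => (e \in K) && isdiag (r e)) (fun e => #|r e|) P0) => e /andP[eK ed] emin.
have key f : f \in K -> isdiag (r f) -> r e \subset r f.
  move=> fK fd.
  have gK : mul e f \in K by rewrite mulKK.
  have rg : r (mul e f) = rcomp (r e) (r f) by rewrite mulr ?inKS.
  have gd : isdiag (r (mul e f)) by rewrite rg comp_diag.
  have := emin _ (introT andP (conj gK gd)); rewrite rg => le.
  have : r e = rcomp (r e) (r f).
    by apply/eqP; rewrite eq_sym eqEcard diag_sub_comp.
  by move=> ->; apply: comp_diag_sub.
have eS := inKS _ eK.
have fK : faithful S mul K := Kf.
have s1S : L I0 I0 \in S by rewrite LS ?I0ne.
have s2S : L I0 I1 \in S by rewrite LS ?I0ne ?I1ne.
have [e0|[e1|e2]] : #|r e| = 0 \/ #|r e| = 1 \/ 2 <= #|r e|.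
    by case: #|r e| => [|[|m]]; auto.
-
  exfalso; move/eqP: e0; rewrite cards_eq0 => /eqP e0.
  have allK s : s \in S -> s \in K by move=> sS; apply: (upK _ e) => //; rewrite e0 sub0set.
  have rcS y : y \in S -> rcoset S mul K y = S.
    move=> yS; apply/setP => w; rewrite /rcoset upcloseE ?subS_mulset //.
    case wS : (w \in S) => //=; apply/exists_inP; exists (mul e y).
      by apply/imsetP; exists e.
    rewrite mulr // e0; apply/subsetP => -[x z] /compP[u []]; by rewrite inE.
  have phiS s : s \in S -> phi S mul K s = [set (S,S)].
    move=> sS; apply/setP => p; rewrite inE [RHS]inE; apply/exists_inP/eqP.
      by case=> x xS /and3P[/eqP -> _ _]; rewrite !rcS ?mulS.
    move=> ->; exists (L I0 I0) => //; rewrite !rcS ?mulS // eqxx /=.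
    have SC : S \in cosets S mul K.
      apply/imsetP; exists (L I0 I0); last by rewrite rcS.
      by apply/setIdP; split; rewrite // allK // mulS // sinvS1.
    by rewrite SC.
  have := fK _ _ s1S s2S; rewrite !phiS // => /(_ erefl) /eqP; exact/negP/s12.
-
  move/eqP: e1 => /cards1P [[A A'] reA].
  have AA : A = A' by move/isdiagP: ed; apply; rewrite reA set11.
  subst A'.
  have AinE : (A,A) \in r e by rewrite reA set11.
  have /andP[/= Ane _] := r_ne eS AinE.
  have aS : L I0 A \in S by rewrite LS ?I0ne.
  have ra : r (L I0 A) = [set (I0,A)] by rewrite Lr ?I0ne.
  apply/exists_inP; exists (L I0 A) => //; apply/andP; split; apply/subsetP => _ /imsetP[h hH ->].
    move/setIdP: hH => [hS hI].
    apply: (upK _ e) => //; first by rewrite !mulS ?sinvS1.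
    rewrite !mulr ?mulS ?sinvS1 // sinvr // ra reA sub1set.
    apply/compP; exists I0; split; last by rewrite set11.
    by apply/compP; exists I0; split; rewrite // rinvE set11.
  have hS := inKS _ hH.
  have gK : mul e h \in K by rewrite mulKK.
  have gS := inKS _ gK.
  have ffK : mul (sinv S mul (mul e h)) (mul e h) \in K by rewrite mulKK ?Kinv.
  have fd : isdiag (r (mul (sinv S mul (mul e h)) (mul e h))).
    rewrite mulr ?sinvS1 // sinvr //.
    by rewrite -{2}(rinvK (r (mul e h))); apply: rinv_diag; apply: rinv_pinj; apply: r_pinj.
  have := key _ ffK fd; rewrite reA sub1set mulr ?sinvS1 // sinvr //.
  case/compP => c []; rewrite rinvE mulr ?inKS // => _ /compP[d []]; rewrite reA inE.
  case/eqP => _ -> AhA.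
  apply/setIdP; split; first by rewrite !mulS ?sinvS1.
  rewrite !mulr ?mulS ?sinvS1 // sinvr // ra.
  apply/compP; exists A; split; last by rewrite rinvE set11.
  by apply/compP; exists A; rewrite set11.
-
  exfalso.
  have phi0 s : s \in S -> #|r s| <= 1 -> phi S mul K s = set0.
    move=> sS rs1; apply/setP => p; rewrite inE [RHS]inE; apply/negbTE/negP.
    case/exists_inP => x xS /and3P[_ _ c2].
    have xsS : mul x s \in S by rewrite mulS.
    case/imsetP: c2 => y /setIdP[yS yK] E.
    have := in_rcoset KS eK xsS.
    rewrite E /rcoset upcloseE ?subS_mulset // => /andP[_ /exists_inP[_ /imsetP[k kK ->] sub]].
    have kS := inKS _ kK.
    have ffK : mul (mul k (mul y (sinv S mul y))) (sinv S mul k) \in K.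
      exact: (mulKK _ _ (mulKK _ _ kK yK) (Kinv _ kK)).
    have rf : r (mul (mul k (mul y (sinv S mul y))) (sinv S mul k)) =
              rcomp (rcomp (r k) (rcomp (r y) (rinv (r y)))) (rinv (r k)).
      by rewrite !mulr ?mulS ?sinvS1 // !sinvr.
    have fd : isdiag (r (mul (mul k (mul y (sinv S mul y))) (sinv S mul k))).
      by rewrite rf; apply: conj_diag; [apply: r_pinj| apply: rinv_diag; apply: r_pinj].
    have ef := key _ ffK fd.
    have le1 : #|r e| <= #|r (mul k y)|.
      apply: card_diag_le => // a b /(subsetP ef); rewrite rf.
      case/compP => c [/compP[c1 [ac1 /compP[d [c1d _]]]] _].
      by exists d; rewrite mulr //; apply/compP; exists c1.
    have le2 := subset_leq_card sub.
    have le3 : #|r (mul e (mul x s))| <= #|r s|.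
      rewrite mulr // mulr //.
      apply: leq_trans (card_comp_le (r_pinj eS) (comp_pinj (r_pinj xS) (r_pinj sS))) _.
      exact: card_comp_le (r_pinj xS) (r_pinj sS).
    have := leq_trans e2 (leq_trans le1 (leq_trans le2 (leq_trans le3 rs1))).
    by [].
  have := fK _ _ s1S s2S; rewrite !phi0 ?Lr ?I0ne ?I1ne ?cards1 // => /(_ erefl) /eqP.
  exact/negP/s12.
Qed.
Lemma abs_main : exists H : {set PT n},
    [/\ closed_inv_subsemigroup S mul H,
        faithful S mul H,
        #|cosets S mul H| = 2 ^ n - 1 &
        forall K : {set PT n},
          closed_inv_subsemigroup S mul K ->
          faithful S mul K ->
          rep_equiv S mul H K].
Proof.
exists Hs; split; [exact: closedH| exact: faithfulH| exact: card_cosets| exact: uniqK].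
Qed.
End Abs.

Lemma connect_pres (T : finType) (e : rel T) (Z : pred T) :
  (forall x y, e x y -> Z x -> Z y) -> forall x y, connect e x y -> Z x -> Z y.
Proof.
move=> H x _ /connectP[p ep ->]; elim: p x ep => //= y p IH x /andP[exy ep] Zx.
exact: IH ep (H _ _ exy Zx).
Qed.

Lemma partitionI (T : finType) (P : {set {set T}}) :
  (forall x, exists2 B, B \in P & x \in B) ->
  (forall B B' x, B \in P -> B' \in P -> x \in B -> x \in B' -> B = B') ->
  set0 \notin P -> partition P setT.
Proof.
move=> cov uni n0; rewrite /partition n0 andbT; apply/andP; split.
  apply/eqP/setP => x; rewrite inE; apply/bigcupP.
  by have [B BP xB] := cov x; exists B.
apply/trivIsetP => A B AP BP neq; rewrite -setI_eq0; apply/eqP/setP => x.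
rewrite !inE; apply/negP => /andP[xA xB].
by move/eqP: neq; apply; apply: uni xA xB.
Qed.

Section Basic.
Variable n : nat.
Local Notation XX := (XX n).
Local Notation PT := (PT n).
Local Notation V := {set 'I_n}.
Implicit Types (a b : PT) (B M : {set XX}).

Lemma inmkl (A D : V) i : (inl i \in mkblock A D) = (i \in A).
Proof. by rewrite inE. Qed.
Lemma inmkr (A D : V) j : (inr j \in mkblock A D) = (j \in D).
Proof. by rewrite inE. Qed.
Lemma inlp B i : (i \in lpart B) = (inl i \in B).
Proof. by rewrite inE. Qed.
Lemma inrp B i : (i \in rpart B) = (inr i \in B).
Proof. by rewrite inE. Qed.

Lemma mkblockK B : mkblock (lpart B) (rpart B) = B.
Proof. by apply/setP => -[i|j]; rewrite inE inE. Qed.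
Lemma lpart_mk (A D : V) : lpart (mkblock A D) = A.
Proof. by apply/setP => i; rewrite inlp inmkl. Qed.
Lemma rpart_mk (A D : V) : rpart (mkblock A D) = D.
Proof. by apply/setP => i; rewrite inrp inmkr. Qed.

Lemma glineE B : gline B = (lpart B != set0) && (rpart B != set0).
Proof.
rewrite /gline; congr andb.
  by apply/existsP/set0Pn => -[i]; rewrite ?inlp => H; exists i; rewrite ?inlp.
by apply/existsP/set0Pn => -[i]; rewrite ?inrp => H; exists i; rewrite ?inrp.
Qed.

Lemma gline_mk (A D : V) : gline (mkblock A D) = (A != set0) && (D != set0).
Proof. by rewrite glineE lpart_mk rpart_mk. Qed.

Lemma sing_not_gline (x : XX) : ~~ gline [set x].
Proof.
apply/negP => /andP[/existsP[i]] /[!inE] /eqP <- /existsP[j]; by rewrite inE.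
Qed.

Lemma gline_ne B : gline B -> #|B| != 1.
Proof.
move=> g; apply/negP => /cards1P[x Ex]; move: g; rewrite Ex.
by move/negP: (sing_not_gline x).
Qed.

Section Valid.
Variable a : PT.
Hypothesis va : valid a.

Lemma va_part : partition a setT.
Proof. by case/andP: va. Qed.
Lemma va_triv : trivIset a.
Proof. by case/and3P: va_part. Qed.
Lemma va_cover x : x \in cover a.
Proof. by case/and3P: va_part => /eqP ->; rewrite inE. Qed.
Lemma pbl_mem x : pblock a x \in a.
Proof. exact: pblock_mem (va_cover x). Qed.
Lemma pbl_in x : x \in pblock a x.
Proof. by rewrite mem_pblock va_cover. Qed.
Lemma pbl_def B x : B \in a -> x \in B -> pblock a x = B.
Proof. exact: def_pblock va_triv. Qed.
Lemma blk_uniq B B' x : B \in a -> B' \in a -> x \in B -> x \in B' -> B = B'.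
Proof. by move=> BP B'P xB xB'; rewrite -(pbl_def BP xB) (pbl_def B'P xB'). Qed.
Lemma blk_kind B : B \in a -> (#|B| == 1) || gline B.
Proof. by case/andP: va => _ /forall_inP; apply. Qed.
Lemma pbl_kind x : (pblock a x = [set x]) \/ gline (pblock a x).
Proof.
case/orP: (blk_kind (pbl_mem x)) => [/cards1P[y E]|]; last by right.
by left; have := pbl_in x; rewrite E inE => /eqP ->.
Qed.
Lemma pbl_sing x : [set x] \in a -> pblock a x = [set x].
Proof. by move=> H; apply: pbl_def H _; rewrite inE. Qed.

End Valid.

Lemma validI a : partition a setT -> (forall B, B \in a -> (#|B| == 1) || gline B) ->
  valid a.
Proof. by move=> p H; rewrite /valid p; apply/forall_inP. Qed.

End Basic.

Section Swap.
Variable n : nat.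
Local Notation XX := (XX n).
Local Notation PT := (PT n).
Local Notation V := {set 'I_n}.
Implicit Types (a b : PT) (B M : {set XX}).

Definition swx (x : XX) : XX := match x with inl i => inr i | inr i => inl i end.
Lemma swxK : involutive swx. Proof. by case. Qed.
Definition Tr a : PT := [set swx @: (B : {set XX}) | B in a].

Lemma in_sw B x : (x \in swx @: B) = (swx x \in B).
Proof.
apply/imsetP/idP => [[y yB ->]|H]; first by rewrite swxK.
by exists (swx x); rewrite ?swxK.
Qed.
Lemma swswB B : swx @: (swx @: B) = B.
Proof. by apply/setP => x; rewrite !in_sw swxK. Qed.
Lemma lpart_sw B : lpart (swx @: B) = rpart B.
Proof. by apply/setP => i; rewrite inlp inrp in_sw. Qed.
Lemma rpart_sw B : rpart (swx @: B) = lpart B.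
Proof. by apply/setP => i; rewrite inlp inrp in_sw. Qed.
Lemma gline_sw B : gline (swx @: B) = gline B.
Proof. by rewrite !glineE lpart_sw rpart_sw andbC. Qed.
Lemma card_sw B : #|swx @: B| = #|B|.
Proof. exact: card_imset (can_inj swxK). Qed.
Lemma mk_sw (A D : V) : swx @: mkblock A D = mkblock D A.
Proof. by apply/setP => -[i|j]; rewrite in_sw /= !inE. Qed.
Lemma Tr_mem a B : (B \in Tr a) = (swx @: B \in a).
Proof.
apply/imsetP/idP => [[B0 B0a ->]|H]; first by rewrite swswB.
by exists (swx @: B); rewrite ?swswB.
Qed.

Lemma valid_Tr a : valid a -> valid (Tr a).
Proof.
move=> va; apply: validI.
  have := imset_partition a setT (can_inj swxK).
  have -> : swx @: setT = setT by apply/setP => x; rewrite in_sw !inE.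
  by move=> ->; exact: va_part.
move=> B; rewrite Tr_mem => /(blk_kind va); by rewrite card_sw gline_sw.
Qed.

Lemma pbl_Tr a x : valid a -> pblock (Tr a) x = swx @: pblock a (swx x).
Proof.
move=> va; apply: pbl_def; first exact: valid_Tr.
  by rewrite Tr_mem swswB pbl_mem.
by rewrite in_sw pbl_in.
Qed.

Lemma TrK a : Tr (Tr a) = a.
Proof. by apply/setP => B; rewrite !Tr_mem swswB. Qed.

End Swap.
Arguments swx {n} x.

Section LAB.
Variable n : nat.
Local Notation XX := (XX n).
Local Notation PT := (PT n).
Local Notation V := {set 'I_n}.
Implicit Types (a b : PT) (B M : {set XX}).

Definition LL (A D : V) : PT := mkblock A D |: [set [set x] | x in ~: mkblock A D].

Lemma LL_mem (A D : V) B : B \in LL A D ->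
  B = mkblock A D \/ exists2 x, x \notin mkblock A D & B = [set x].
Proof.
case/setU1P => [->|/imsetP[x]]; first by left.
by rewrite in_setC => xn ->; right; exists x.
Qed.

Lemma LL_sing (A D : V) x : x \notin mkblock A D -> [set x] \in LL A D.
Proof. by move=> xn; apply: setU1r; apply/imsetP; exists x; rewrite ?in_setC. Qed.

Lemma valid_LL (A D : V) : A != set0 -> D != set0 -> valid (LL A D).
Proof.
move=> An Dn; have gM : gline (mkblock A D) by rewrite gline_mk An Dn.
apply: validI.
  apply: partitionI.
  - move=> x; case xM: (x \in mkblock A D).
      by exists (mkblock A D); rewrite ?setU11.
    by exists [set x]; [apply: LL_sing; rewrite xM | rewrite set11].
  - move=> B B' x /LL_mem[->|[y yn ->]] /LL_mem[->|[z zn ->]] //.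
    + by move=> xM; rewrite inE => /eqP ?; subst z; rewrite xM in zn.
    + by rewrite inE => /eqP ? xM; subst y; rewrite xM in yn.
    + by rewrite !inE => /eqP -> /eqP ->.
  - apply/negP => /LL_mem[E|[x _ E]].
      by move: gM; rewrite -E /gline; case/andP => /existsP[i]; rewrite inE.
    by have := set11 x; rewrite -E inE.
move=> B /LL_mem[->|[x _ ->]]; first by rewrite gM orbT.
by rewrite cards1.
Qed.

Lemma pbl_LL (A D : V) x : A != set0 -> D != set0 ->
  pblock (LL A D) x = if x \in mkblock A D then mkblock A D else [set x].
Proof.
move=> An Dn; have vL := valid_LL An Dn.
case: ifP => xM; first by apply: pbl_def => //; rewrite setU11.
by apply: pbl_def => //; [apply: LL_sing; rewrite xM | rewrite set11].
Qed.

End LAB.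

Lemma eq_from_glines n (a a' : PT n) : valid a -> valid a' ->
  (forall B, B \in a -> gline B -> B \in a') ->
  (forall B, B \in a' -> gline B -> B \in a) -> a = a'.
Proof.
have H (c c' : PT n) : valid c -> valid c' ->
  (forall B, B \in c -> gline B -> B \in c') ->
  (forall B, B \in c' -> gline B -> B \in c) -> c \subset c'.
  move=> vc vc' H1 H2; apply/subsetP => B Bc.
  case/orP: (blk_kind vc Bc) => [/cards1P[x Ex]|]; last exact: H1.
  case: (pbl_kind vc' x) => [E|g]; first by rewrite Ex -E pbl_mem.
  have xB : x \in B by rewrite Ex set11.
  have E' := blk_uniq vc Bc (H2 _ (pbl_mem vc' x) g) xB (pbl_in vc' x).
  by move: g; rewrite -E' Ex; move/negP: (sing_not_gline x).
move=> va va' H1 H2; apply/eqP; rewrite eqEsubset !H //.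
Qed.

Section Circ.
Variable n : nat.
Local Notation XX := (XX n).
Local Notation PT := (PT n).
Local Notation V := {set 'I_n}.
Implicit Types (a b : PT) (B M : {set XX}).

Definition rc a : {set V * V} :=
  [set p | [&& mkblock p.1 p.2 \in a, p.1 != set0 & p.2 != set0]].

Lemma rcP a (A D : V) :
  (A,D) \in rc a = [&& mkblock A D \in a, A != set0 & D != set0].
Proof. by rewrite inE. Qed.

Lemma circ_linesP a b (N : {set XX}) :
  reflect (exists (A B D : V), [/\ (A,B) \in rc a, (B,D) \in rc b & N = mkblock A D])
          (N \in circ_lines a b).
Proof.
apply: (iffP imset2P) => [[L M La]|[A [B [D []]]]].
  rewrite inE => /andP[Mb /and3P[gL gM /eqP E]] ->.
  exists (lpart L), (rpart L), (rpart M); split => //.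
  - by rewrite rcP mkblockK La -glineE.
  - by rewrite E rcP mkblockK Mb -glineE.
rewrite !rcP => /and3P[Ma An Bn] /and3P[Mb _ Dn] ->.
apply: (@Imset2spec _ _ _ _ _ _ _ (mkblock A B) (mkblock B D) Ma); last first.
  by rewrite lpart_mk rpart_mk.
apply/setIdP; split => //.
by rewrite !gline_mk An Bn Dn rpart_mk lpart_mk eqxx.
Qed.

Section CircV.
Variable a : PT.
Hypothesis va : valid a.

Lemma rc_l (A1 B1 A2 B2 : V) i : (A1,B1) \in rc a -> (A2,B2) \in rc a ->
  i \in A1 -> i \in A2 -> A1 = A2 /\ B1 = B2.
Proof.
rewrite !rcP => /andP[M1 _] /andP[M2 _] i1 i2.
have E : mkblock A1 B1 = mkblock A2 B2.
  by apply: (blk_uniq va M1 M2 (x := inl i)); rewrite inmkl.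
by split; [rewrite -(lpart_mk A1 B1) E lpart_mk | rewrite -(rpart_mk A1 B1) E rpart_mk].
Qed.

Lemma rc_r (A1 B1 A2 B2 : V) j : (A1,B1) \in rc a -> (A2,B2) \in rc a ->
  j \in B1 -> j \in B2 -> A1 = A2 /\ B1 = B2.
Proof.
rewrite !rcP => /andP[M1 _] /andP[M2 _] i1 i2.
have E : mkblock A1 B1 = mkblock A2 B2.
  by apply: (blk_uniq va M1 M2 (x := inr j)); rewrite inmkr.
by split; [rewrite -(lpart_mk A1 B1) E lpart_mk | rewrite -(rpart_mk A1 B1) E rpart_mk].
Qed.

Lemma rc_pinj : pinj (rc a).
Proof.
split.
  move=> x y z xy xz; have := xy; rewrite rcP => /and3P[_ /set0Pn[i ix] _].
  by case: (rc_l xy xz ix ix).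
move=> x y z xz yz; have := xz; rewrite rcP => /and3P[_ _ /set0Pn[j jz]].
by case: (rc_r xz yz jz jz).
Qed.

Lemma rc_Tr : rc (Tr a) = rinv (rc a).
Proof.
apply/setP => -[A D]; rewrite rinvE !rcP Tr_mem mk_sw.
by case: (mkblock D A \in a); case: (A != set0); case: (D != set0).
Qed.

Lemma rc_ne p : p \in rc a -> (p.1 != set0) && (p.2 != set0).
Proof. by case: p => A D; rewrite rcP => /and3P[_ -> ->]. Qed.

End CircV.

Lemma rc_inj a a' : valid a -> valid a' -> rc a = rc a' -> a = a'.
Proof.
move=> va va' E; apply: eq_from_glines => // B Ba gB.
  have : (lpart B, rpart B) \in rc a by rewrite rcP mkblockK Ba -glineE.
  by rewrite E rcP mkblockK => /andP[].
have : (lpart B, rpart B) \in rc a' by rewrite rcP mkblockK Ba -glineE.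
by rewrite -E rcP mkblockK => /andP[].
Qed.

Lemma rc_LL (A D : V) : A != set0 -> D != set0 -> rc (LL A D) = [set (A,D)].
Proof.
move=> An Dn; apply/setP => -[A' D']; rewrite rcP in_set1; apply/idP/idP.
  case/and3P => /LL_mem[E|[x _ E]] An' Dn'.
    have e1 : A' = A by rewrite -(lpart_mk A' D') E lpart_mk.
    have e2 : D' = D by rewrite -(rpart_mk A' D') E rpart_mk.
    by rewrite e1 e2.
  by move: (gline_mk A' D'); rewrite E An' Dn' (negbTE (sing_not_gline x)).
by case/eqP => -> ->; rewrite An Dn setU11.
Qed.

Section CircMul.
Variables a b : PT.
Hypotheses (va : valid a) (vb : valid b).

Lemma circ_lines_mem (N : {set XX}) : N \in circ_lines a b ->
  exists A D, [/\ (A,D) \in rcomp (rc a) (rc b), A != set0, D != set0 & N = mkblock A D].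
Proof.
case/circ_linesP => A [B [D [AB BD ->]]]; exists A, D; split => //.
- by apply/compP; exists B.
- by case/andP: (rc_ne AB).
- by case/andP: (rc_ne BD).
Qed.

Lemma circ_mem (N : {set XX}) : N \in circ a b ->
  (exists A D, [/\ (A,D) \in rcomp (rc a) (rc b), A != set0, D != set0 & N = mkblock A D])
  \/ exists2 x, x \notin cover (circ_lines a b) & N = [set x].
Proof.
case/setUP => [/circ_lines_mem H|/imsetP[x]]; first by left.
by rewrite in_setC => xn ->; right; exists x.
Qed.

Lemma valid_circ : valid (circ a b).
Proof.
have [pa pb] := (rc_pinj va, rc_pinj vb).
apply: validI.
  apply: partitionI.
  - move=> x; case xc: (x \in cover (circ_lines a b)).
      case/bigcupP: xc => N Nl xN; exists N => //; by rewrite in_setU Nl.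
    exists [set x]; rewrite ?set11 //; rewrite in_setU; apply/orP; right; apply/imsetP; exists x => //.
    by rewrite in_setC xc.
  - move=> N1 N2 x /circ_mem[[A1 [D1 [c1 A1n D1n ->]]]|[y yn ->]]
                   /circ_mem[[A2 [D2 [c2 A2n D2n ->]]]|[z zn ->]].
    + case/compP: c1 => B1 [ab1 bd1]; case/compP: c2 => B2 [ab2 bd2].
      case: x => [i|j]; rewrite ?inmkl ?inmkr => x1 x2.
        have [? ?] := rc_l va ab1 ab2 x1 x2; subst A2 B2.
        by have [f1 _] := pb; rewrite (f1 _ _ _ bd1 bd2).
      have [? ?] := rc_r vb bd1 bd2 x1 x2; subst B2 D2.
      by have [_ f2] := pa; rewrite (f2 _ _ _ ab1 ab2).
    + move=> xN; rewrite inE => /eqP ?; subst z; case/negP: zn.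
      apply/bigcupP; exists (mkblock A1 D1) => //.
      apply/circ_linesP; case/compP: c1 => B [? ?]; by exists A1, B, D1.
    + rewrite inE => /eqP ? xN; subst y; case/negP: yn.
      apply/bigcupP; exists (mkblock A2 D2) => //.
      apply/circ_linesP; case/compP: c2 => B [? ?]; by exists A2, B, D2.
    + by rewrite !inE => /eqP -> /eqP ->.
  - apply/negP => /circ_mem[[A [D [_ An Dn E]]]|[x _ E]].
      by move: (gline_mk A D); rewrite -E An Dn /gline; case/andP => /existsP[i]; rewrite inE.
    by have := set11 x; rewrite -E inE.
move=> N /circ_mem[[A [D [_ An Dn ->]]]|[x _ ->]]; last by rewrite cards1.
by rewrite gline_mk An Dn orbT.
Qed.

Lemma rc_circ : rc (circ a b) = rcomp (rc a) (rc b).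
Proof.
apply/setP => -[A D]; rewrite rcP; apply/idP/idP.
  case/and3P => /circ_mem[[A' [D' [c _ _ E]]]|[x _ E]] An Dn.
    have [-> ->] : A = A' /\ D = D'.
      by split; [rewrite -(lpart_mk A D) E lpart_mk| rewrite -(rpart_mk A D) E rpart_mk].
    exact: c.
  by move: (gline_mk A D); rewrite E An Dn (negbTE (sing_not_gline x)).
move=> c; have := c; case/compP => B [ab bd].
have /andP[An _] := rc_ne ab; have /andP[_ Dn] := rc_ne bd.
rewrite An Dn !andbT in_setU; apply/orP; left; apply/circ_linesP.
by exists A, B, D.
Qed.

End CircMul.
End Circ.

Section Star.
Variable n : nat.
Local Notation XX := (XX n).
Local Notation XXX := (XXX n).
Local Notation PT := (PT n).
Local Notation V := {set 'I_n}.
Implicit Types (a b : PT) (M : {set XX}).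

Definition good a M := [forall x in M, (pblock a x \subset M) && gline (pblock a x)].
Definition rs a : {set V * V} :=
  [set p | [&& p.1 != set0, p.2 != set0 & good a (mkblock p.1 p.2)]].

Lemma rsP a (A D : V) :
  (A,D) \in rs a = [&& A != set0, D != set0 & good a (mkblock A D)].
Proof. by rewrite inE. Qed.

Lemma goodP a M :
  reflect (forall x, x \in M -> pblock a x \subset M /\ gline (pblock a x)) (good a M).
Proof.
apply: (iffP forall_inP) => H x /H; first by case/andP.
by case=> -> ->.
Qed.

Lemma rs_ne a p : p \in rs a -> (p.1 != set0) && (p.2 != set0).
Proof. by case: p => A D; rewrite rsP => /and3P[-> ->]. Qed.

Section RsV.
Variable a : PT.
Hypothesis va : valid a.

Lemma rs_block B : B \in a -> gline B -> (lpart B, rpart B) \in rs a.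
Proof.
move=> Ba gB; rewrite rsP; have := gB; rewrite glineE => /andP[-> ->] /=.
rewrite mkblockK.
by apply/goodP => x xB; rewrite (pbl_def va Ba xB).
Qed.

Lemma good_Tr M : good (Tr a) M = good a (swx @: M).
Proof.
apply/goodP/goodP => H x.
  rewrite in_sw => /H; rewrite pbl_Tr // swxK gline_sw => -[sub g]; split => //.
  by apply/subsetP => y yP; rewrite in_sw; apply: (subsetP sub); rewrite in_sw swxK.
move=> xM; have := H (swx x); rewrite in_sw swxK => /(_ xM) [sub g].
rewrite pbl_Tr // gline_sw; split => //.
by apply/subsetP => y; rewrite in_sw => /(subsetP sub); rewrite in_sw swxK.
Qed.

Lemma rs_Tr : rs (Tr a) = rinv (rs a).
Proof.
apply/setP => -[A D]; rewrite rinvE !rsP good_Tr mk_sw.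
by case: (A != set0); case: (D != set0).
Qed.

Lemma rs_func (A B B' : V) : (A,B) \in rs a -> (A,B') \in rs a -> B \subset B'.
Proof.
rewrite !rsP => /and3P[_ _ /goodP g1] /and3P[_ _ /goodP g2].
apply/subsetP => j jB.
have jM : inr j \in mkblock A B by rewrite inmkr.
have [sub gP] := g1 _ jM.
case/andP: gP => /existsP[i iP] _.
have iA : i \in A by rewrite -(inmkl A B); apply: (subsetP sub).
have iM : inl i \in mkblock A B' by rewrite inmkl.
have [sub2 _] := g2 _ iM.
rewrite (pbl_def va (pbl_mem va (inr j)) iP) in sub2.
by rewrite -(inmkr A B'); apply: (subsetP sub2); apply: pbl_in.
Qed.

End RsV.

Lemma rs_pinj a : valid a -> pinj (rs a).
Proof.
move=> va; split.
  by move=> x y z xy xz; apply/eqP; rewrite eqEsubset !(rs_func va xy xz, rs_func va xz xy).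
move=> x y z xz yz.
have vt := valid_Tr va.
have xz' : (z,x) \in rs (Tr a) by rewrite rs_Tr // rinvE.
have yz' : (z,y) \in rs (Tr a) by rewrite rs_Tr // rinvE.
by apply/eqP; rewrite eqEsubset !(rs_func vt xz' yz', rs_func vt yz' xz').
Qed.

Lemma rs_inj a a' : valid a -> valid a' -> rs a = rs a' -> a = a'.
Proof.
have H (c c' : PT) : valid c -> valid c' -> rs c = rs c' ->
    forall B, B \in c -> gline B -> B \in c'.
  move=> vc vc' E B Bc gB.
  have := rs_block vc Bc gB; rewrite E rsP mkblockK => /and3P[_ _ /goodP g].
  have /existsP[i iB] := (andP gB).1.
  have [sub gP] := g _ iB.
  have := rs_block vc' (pbl_mem vc' (inl i)) gP.
  rewrite -E rsP mkblockK => /and3P[_ _ /goodP g'].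
  have [sub' _] := g' _ (pbl_in vc' (inl i)).
  rewrite (pbl_def vc Bc iB) in sub'.
  have -> : B = pblock c' (inl i) by apply/eqP; rewrite eqEsubset sub sub'.
  exact: pbl_mem.
move=> va va' E; apply: eq_from_glines => //; apply: H => //.
Qed.

Lemma rs_LL (A D : V) : A != set0 -> D != set0 -> rs (LL A D) = [set (A,D)].
Proof.
move=> An Dn; have vL := valid_LL An Dn.
apply/setP => -[A' D']; rewrite rsP in_set1; apply/idP/idP.
  case/and3P => An' Dn' /goodP g.
  have sub1 : mkblock A' D' \subset mkblock A D.
    apply/subsetP => x xM; have [_] := g _ xM; rewrite pbl_LL //.
    by case: ifP => // _; rewrite (negbTE (sing_not_gline x)).
  case/set0Pn: An' => i iA'.
  have iM : inl i \in mkblock A' D' by rewrite inmkl.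
  have [sub2 _] := g _ iM.
  move: sub2; rewrite pbl_LL //; case: ifP => [_ sub2|]; last first.
    by rewrite (subsetP sub1) // inmkl.
  have E : mkblock A' D' = mkblock A D by apply/eqP; rewrite eqEsubset sub1 sub2.
  have e1 : A' = A by rewrite -(lpart_mk A' D') E lpart_mk.
  have e2 : D' = D by rewrite -(rpart_mk A' D') E rpart_mk.
  by rewrite e1 e2.
case/eqP => -> ->; rewrite An Dn /=; apply/goodP => x xM.
by rewrite pbl_LL // xM subxx gline_mk An Dn.
Qed.

End Star.

Section StarMul.
Variable n : nat.
Local Notation XX := (XX n).
Local Notation XXX := (XXX n).
Local Notation PT := (PT n).
Local Notation V := {set 'I_n}.
Variables a b : PT.
Hypotheses (va : valid a) (vb : valid b).
Local Notation sim := (sim a b).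
Local Notation genrel := (genrel a b).
Local Notation bad := (bad a b).
Local Notation fs := (from_singleton a b).

Lemma genrel_sym : symmetric genrel.
Proof.
move=> u v; rewrite /Defs.genrel.
congr orb; apply/existsP/existsP => -[B /and3P[H1 H2 H3]]; exists B;
  by rewrite H1 H2 H3.
Qed.

Lemma sim_sym u v : sim u v = sim v u.
Proof. exact: (sym_connect_sym genrel_sym). Qed.

Lemma sim_trans u v w : sim u v -> sim v w -> sim u w.
Proof. exact: connect_trans. Qed.

Lemma sim_refl u : sim u u.
Proof. exact: connect0. Qed.

Lemma ga x y : y \in pblock a x -> genrel (ea x) (ea y).
Proof.
move=> yP; apply/orP; left; apply/exists_inP; exists (pblock a x); first exact: pbl_mem.
by rewrite !imset_f ?pbl_in.
Qed.

Lemma gb x y : y \in pblock b x -> genrel (eb x) (eb y).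
Proof.
move=> yP; apply/orP; right; apply/exists_inP; exists (pblock b x); first exact: pbl_mem.
by rewrite !imset_f ?pbl_in.
Qed.

Lemma genrelE u v : genrel u v ->
  (exists x y, [/\ u = ea x, v = ea y & y \in pblock a x]) \/
  (exists x y, [/\ u = eb x, v = eb y & y \in pblock b x]).
Proof.
case/orP => /exists_inP[B BP /andP[/imsetP[x xB ->] /imsetP[y yB ->]]].
  by left; exists x, y; split => //; rewrite (pbl_def va BP xB).
by right; exists x, y; split => //; rewrite (pbl_def vb BP xB).
Qed.

Lemma fsE w : fs w ->
  (exists2 x, [set x] \in a & w = ea x) \/ (exists2 x, [set x] \in b & w = eb x).
Proof.
by case/orP => /existsP[x /andP[H /eqP ->]]; [left|right]; exists x.
Qed.

Lemma fs_a x : pblock a x = [set x] -> fs (ea x).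
Proof.
move=> E; apply/orP; left; apply/existsP; exists x; rewrite eqxx andbT -E.
exact: pbl_mem.
Qed.

Lemma fs_b x : pblock b x = [set x] -> fs (eb x).
Proof.
move=> E; apply/orP; right; apply/existsP; exists x; rewrite eqxx andbT -E.
exact: pbl_mem.
Qed.

Lemma badI u w : sim (eout u) w -> fs w -> bad u.
Proof. by move=> s f; apply/existsP; exists w; rewrite s f. Qed.

Lemma bad_eq u v : sim (eout u) (eout v) -> bad u = bad v.
Proof.
move=> s; apply/existsP/existsP => -[w /andP[s' f]]; exists w; rewrite f andbT.
  by apply: sim_trans s'; rewrite sim_sym.
exact: sim_trans s s'.
Qed.

Lemma nb_a u x : ~~ bad u -> sim (eout u) (ea x) -> gline (pblock a x).
Proof.
move=> nb s; case: (pbl_kind va x) => // E.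
by case/negP: nb; apply: badI s (fs_a E).
Qed.

Lemma nb_b u x : ~~ bad u -> sim (eout u) (eb x) -> gline (pblock b x).
Proof.
move=> nb s; case: (pbl_kind vb x) => // E.
by case/negP: nb; apply: badI s (fs_b E).
Qed.

Definition R u v := (v == u) || (sim (eout u) (eout v) && ~~ bad u).
Definition blk u := [set v | R u v].

Lemma R_equiv : {in [set: XX] & &, equivalence_rel R}.
Proof.
move=> x y z _ _ _; split; first by rewrite /R eqxx.
rewrite /R; case: eqP => [->//|_] /= /andP[sxy nbx].
have nby : ~~ bad y by rewrite -(bad_eq sxy).
rewrite nbx nby !andbT.
have syx : sim (eout y) (eout x) by rewrite sim_sym.
case: (z =P y) => [->|_]; first by rewrite sxy orbT sim_refl.
case: (z =P x) => [->|_] /=; first by rewrite syx.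
apply/idP/idP => H; [exact: sim_trans syx H| exact: sim_trans sxy H].
Qed.

Lemma star_eq : star a b = equivalence_partition R setT.
Proof.
apply/setP => N; apply/imsetP/imsetP => -[x _ ->]; exists x => //;
  by apply/setP => y; rewrite !inE.
Qed.

Lemma star_part : partition (star a b) setT.
Proof. by rewrite star_eq; apply: equivalence_partitionP R_equiv. Qed.

Lemma blk_in u : u \in blk u.
Proof. by rewrite inE /R eqxx. Qed.

Lemma blk_mem u : blk u \in star a b.
Proof. by apply/imsetP; exists u. Qed.

Lemma pbl_star u : pblock (star a b) u = blk u.
Proof.
apply: def_pblock (blk_mem u) (blk_in u).
by case/and3P: star_part.
Qed.

Lemma blk_bad u : bad u -> blk u = [set u].
Proof. by move=> bu; apply/setP => v; rewrite !inE /R bu andbF orbF. Qed.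

Lemma blk_gline u : ~~ bad u -> gline (blk u).
Proof.
move=> nb.
have inblk v : sim (eout u) (eout v) -> v \in blk u.
  by move=> s; rewrite inE /R s nb orbT.
case: u nb inblk => [i|k] nb inblk.
- have s0 : sim (eout (inl i)) (ea (inl i)) by apply: sim_refl.
  have /andP[_ /existsP[j jP]] := nb_a nb s0.
  have s1 : sim (eout (inl i)) (eb (inl j)).
    by apply: sim_trans s0 (connect1 (ga jP)).
  have /andP[_ /existsP[k kP]] := nb_b nb s1.
  have s2 : sim (eout (inl i)) (eout (inr k)).
    by apply: sim_trans s1 (connect1 (gb kP)).
  apply/andP; split; apply/existsP; [exists i; exact: blk_in| exists k; exact: inblk].
- have s0 : sim (eout (inr k)) (eb (inr k)) by apply: sim_refl.
  have /andP[/existsP[j jP] _] := nb_b nb s0.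
  have s1 : sim (eout (inr k)) (ea (inr j)).
    by apply: sim_trans s0 (connect1 (gb jP)).
  have /andP[/existsP[i iP] _] := nb_a nb s1.
  have s2 : sim (eout (inr k)) (eout (inl i)).
    by apply: sim_trans s1 (connect1 (ga iP)).
  apply/andP; split; apply/existsP; [exists i; exact: inblk| exists k; exact: blk_in].
Qed.

Lemma valid_star : valid (star a b).
Proof.
apply: validI; first exact: star_part.
move=> N /imsetP[u _ ->]; change ((#|blk u| == 1) || gline (blk u)).
case bu: (bad u); first by rewrite blk_bad // cards1.
by rewrite blk_gline ?orbT // bu.
Qed.


Lemma rs_star_in (A B D : V) : (A,B) \in rs a -> (B,D) \in rs b -> (A,D) \in rs (star a b).
Proof.
rewrite !rsP => /and3P[An Bn /goodP gab] /and3P[_ Dn /goodP gbd].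
pose Zf (w : XXX) := match w with
  | inl (inl i) => i \in A | inl (inr j) => j \in B | inr k => k \in D end.
have Zea x : Zf (ea x) = (x \in mkblock A B) by case: x => ?; rewrite /= ?inmkl ?inmkr.
have Zeb x : Zf (eb x) = (x \in mkblock B D) by case: x => ?; rewrite /= ?inmkl ?inmkr.
have Zeo x : Zf (eout x) = (x \in mkblock A D) by case: x => ?; rewrite /= ?inmkl ?inmkr.
have Zcl w w' : genrel w w' -> Zf w -> Zf w'.
  case/genrelE => -[x [y [-> -> yP]]].
    by rewrite !Zea => xM; have [sub _] := gab _ xM; exact: (subsetP sub).
  by rewrite !Zeb => xM; have [sub _] := gbd _ xM; exact: (subsetP sub).
have Znf w : Zf w -> ~~ fs w.
  move=> Zw; apply/negP => /fsE[[x xa E]|[x xb E]]; subst w.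
    rewrite Zea in Zw; have [_ gl] := gab _ Zw; move: gl.
    by rewrite (pbl_sing va xa); move/negP: (sing_not_gline x).
  rewrite Zeb in Zw; have [_ gl] := gbd _ Zw; move: gl.
  by rewrite (pbl_sing vb xb); move/negP: (sing_not_gline x).
have nbv v : v \in mkblock A D -> ~~ bad v.
  move=> vM; apply/negP => /existsP[w /andP[sw f]].
  have Zw : Zf w by apply: (connect_pres Zcl sw); rewrite Zeo.
  by move/negP: (Znf _ Zw).
rewrite An Dn /=; apply/goodP => v vM; rewrite pbl_star; split; last exact: blk_gline (nbv _ vM).
apply/subsetP => w; rewrite inE /R => /orP[/eqP -> //|/andP[sw _]].
by rewrite -Zeo; apply: (connect_pres Zcl sw); rewrite Zeo.
Qed.

Lemma rs_star_out (A D : V) : (A,D) \in rs (star a b) ->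
  exists2 B, (A,B) \in rs a & (B,D) \in rs b.
Proof.
rewrite rsP => /and3P[An Dn /goodP g].
have nbv v : v \in mkblock A D -> ~~ bad v.
  move=> vM; apply/negP => bv; have [_] := g _ vM; rewrite pbl_star blk_bad //.
  by move/negP: (sing_not_gline v).
pose Z w := [exists v in mkblock A D, sim (eout v) w].
have F1 u : Z (eout u) -> u \in mkblock A D.
  case/exists_inP => v vM sv; have [sub _] := g _ vM; apply: (subsetP sub).
  by rewrite pbl_star inE /R sv nbv ?orbT.
have F2 w : Z w -> ~~ fs w.
  case/exists_inP => v vM sv; apply/negP => f; case/negP: (nbv _ vM).
  exact: badI sv f.
have F3 w w' : Z w -> genrel w w' -> Z w'.
  case/exists_inP => v vM sv e; apply/exists_inP; exists v => //.
  exact: sim_trans sv (connect1 e).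
have ZM u : u \in mkblock A D -> Z (eout u).
  by move=> uM; apply/exists_inP; exists u => //; apply: sim_refl.
pose B := [set j | Z (inl (inr j))].
have Zea x : Z (ea x) = (x \in mkblock A B).
  case: x => [i|j]; last by rewrite inmkr inE.
  rewrite inmkl; apply/idP/idP => [/(F1 (inl i))|iA]; first by rewrite inmkl.
  by apply: (ZM (inl i)); rewrite inmkl.
have Zeb x : Z (eb x) = (x \in mkblock B D).
  case: x => [j|k]; first by rewrite inmkl inE.
  rewrite inmkr; apply/idP/idP => [/(F1 (inr k))|kD]; first by rewrite inmkr.
  by apply: (ZM (inr k)); rewrite inmkr.
have gA : good a (mkblock A B).
  apply/goodP => x; rewrite -Zea => Zx; split.
    by apply/subsetP => y yP; rewrite -Zea; exact: F3 Zx (ga yP).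
  by case: (pbl_kind va x) => // E; case/negP: (F2 _ Zx); apply: fs_a.
have gB : good b (mkblock B D).
  apply/goodP => x; rewrite -Zeb => Zx; split.
    by apply/subsetP => y yP; rewrite -Zeb; exact: F3 Zx (gb yP).
  by case: (pbl_kind vb x) => // E; case/negP: (F2 _ Zx); apply: fs_b.
have Bn : B != set0.
  case/set0Pn: An => i iA; have iM : inl i \in mkblock A B by rewrite inmkl.
  have [sub /andP[_ /existsP[j jP]]] := (goodP _ _ gA) _ iM.
  by apply/set0Pn; exists j; rewrite -(inmkr A B); apply: (subsetP sub).
by exists B; rewrite rsP ?An ?Bn ?Dn.
Qed.

Lemma rs_star : rs (star a b) = rcomp (rs a) (rs b).
Proof.
apply/setP => -[A D]; apply/idP/idP.
  by case/rs_star_out => B ab bd; apply/compP; exists B; split.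
by case/compP => B [ab bd]; exact: (rs_star_in ab bd).
Qed.
End StarMul.

Theorem mainTheorem17 (n : nat) (hn : 2 <= n) (mul : PT n -> PT n -> PT n)
  (hmul : mul = @star n \/ mul = @circ n) :
  exists H : {set PT n},
    [/\ closed_inv_subsemigroup (Pn n) mul H,
        faithful (Pn n) mul H,
        #|cosets (Pn n) mul H| = 2 ^ n - 1 &
        forall K : {set PT n},
          closed_inv_subsemigroup (Pn n) mul K ->
          faithful (Pn n) mul K ->
          rep_equiv (Pn n) mul H K].
Proof.
have h0 : 0 < n by apply: leq_trans hn.
have i01 : Ordinal h0 != Ordinal hn by [].
have inPn (a : PT n) : (a \in Pn n) = valid a by rewrite inE.
case: hmul => ->.
- apply: (abs_main (r := @rs n) (L := @LL n) _ _ _ _ _ _ _ _ i01).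
  + by move=> a b; rewrite !inPn; apply: valid_star.
  + by move=> a b; rewrite !inPn; apply: rs_star.
  + by move=> a a'; rewrite !inPn; apply: rs_inj.
  + by move=> a; rewrite inPn; apply: rs_pinj.
  + move=> a; rewrite inPn => va; exists (Tr a); first by rewrite inPn valid_Tr.
    exact: rs_Tr.
  + by move=> a p _; apply: rs_ne.
  + by move=> A B An Bn; rewrite inPn valid_LL.
  + exact: rs_LL.
- apply: (abs_main (r := @rc n) (L := @LL n) _ _ _ _ _ _ _ _ i01).
  + by move=> a b; rewrite !inPn; apply: valid_circ.
  + by move=> a b _ _; apply: rc_circ.
  + by move=> a a'; rewrite !inPn; apply: rc_inj.
  + by move=> a; rewrite inPn; apply: rc_pinj.
  + move=> a; rewrite inPn => va; exists (Tr a); first by rewrite inPn valid_Tr.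
    exact: rc_Tr.
  + by move=> a p _; apply: rc_ne.
  + by move=> A B An Bn; rewrite inPn valid_LL.
  + exact: rc_LL.
Qed.
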